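(* Let $\mathbf F$ be a nonincreasing foliage tree and $\varphi$ a consistent family of foliage grafts for $\mathbf F$ such that $\mathrm{fhybr}(\mathbf F,\varphi)$ has nonempty leaves and each $\mathbf G\in\varphi$ preserves shoots of $\mathbf F$. Then $\mathrm{fhybr}(\mathbf F,\varphi)$ shoots into $\mathbf F$.
   Context: Trees: a tree is a pair $(Q,<)$ with $<$ irreflexive transitive and predecessor sets well-ordered; $\parallel$ = incomparable; $\mathrm{sons}(x)$ = immediate successors; $\max$ = maximal nodes; $0$ = least node; $A{\downarrow}=\{v:\exists a\in A\ a\le v\}$; for an antichain $A$ and $x\in A{\downarrow}$, $\mathrm{root}(x,A)$ is the unique $r\in A$ with $r\le x$. A graft for a tree $\mathcal T$ is a tree $\mathcal G$ with more than one node, least node $0_{\mathcal G}\in\mathrm{nodes}\,\mathcal T$, $\max\mathcal G\subseteq\{v\in\mathrm{nodes}\,\mathcal T:v>_{\mathcal T}0_{\mathcal G}\}$ an antichain in $\mathcal T$, and $\mathrm{impl}\,\mathcal G:=\mathrm{nodes}\,\mathcal G\setminus(\{0_{\mathcal G}\}\cup\max\mathcal G)$ disjoint from $\mathrm{nodes}\,\mathcal T$; $\mathrm{expl}(\mathcal T,\mathcal G)=\{v:v>_{\mathcal T}0_{\mathcal G}\}\setminus(\max\mathcal G){\downarrow}_{\mathcal T}$. A consistent family $\gamma$ of grafts for $\mathcal T$: members are grafts with pairwise disjoint implants, and for distinct $\mathcal D,\mathcal E$: $0_{\mathcal D}\parallel_{\mathcal T}0_{\mathcal E}$ or $0_{\mathcal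 D}\in(\max\mathcal E){\downarrow}_{\mathcal T}$ or $0_{\mathcal E}\in(\max\mathcal D){\downarrow}_{\mathcal T}$. $\mathrm{supp}(\mathcal T,\gamma)=\mathrm{nodes}\,\mathcal T\setminus\bigcup_{\mathcal G\in\gamma}\mathrm{expl}(\mathcal T,\mathcal G)$. $\mathrm{hybr}(\mathcal T,\gamma)$ is the tree on $\mathrm{supp}(\mathcal T,\gamma)\cup\bigcup_{\mathcal G\in\gamma}\mathrm{impl}\,\mathcal G$ with $x<y$ iff: (b1) $x,y\in\mathrm{supp}$, $x<_{\mathcal T}y$; (b2) $x,y\in\mathrm{impl}\,\mathcal G$, $x<_{\mathcal G}y$; (b3) $x\in\mathrm{supp}$, $y\in\mathrm{impl}\,\mathcal G$, $x\le_{\mathcal T}0_{\mathcal G}$; (b4) $x\in\mathrm{impl}\,\mathcal G$, $y\in\mathrm{supp}\cap(\max\mathcal G){\downarrow}_{\mathcal T}$, $x<_{\mathcal G}\mathrm{root}_{\mathcal T}(y,\max\mathcal G)$; or (b5) $x\in\mathrm{impl}\,\mathcal D$, $y\in\mathrm{impl}\,\mathcal E$ ($\mathcal D\ne\mathcal E$), $0_{\mathcal E}\in(\max\mathcal D){\downarrow}_{\mathcal T}$, $x<_{\mathcal D}\mathrm{root}_{\mathcal T}(0_{\mathcal E},\max\mathcal D)$. Foliage trees: $\mathbf F=(\mathcal T,l)$ with skeleton $\mathcal T$ and leaves $\mathbf F_x=l(x)$; nonincreasing: $x\le y\Rightarrow\mathbf F_y\subseteq\mathbf F_x$; nonempty leaves: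 every leaf nonempty; $\mathrm{flesh}\,\mathbf F=\bigcup_x\mathbf F_x$; $\mathrm{shoot}_{\mathbf F}(z)=\{\bigcup_{s\in C}\mathbf F_s:C$ cofinite subset of $\mathrm{sons}(z)\}$; $\mathrm{scope}_{\mathbf F}(p)=\{y:p\in\mathbf F_y\}$; $\gamma\gg\delta$ means every nonempty $D\in\delta$ contains some nonempty $G\in\gamma$. A foliage graft for nonincreasing $\mathbf F$ is a nonincreasing foliage tree $\mathbf G$ with skeleton a graft for the skeleton of $\mathbf F$, $\mathbf G_{0_{\mathbf G}}\subseteq\mathbf F_{0_{\mathbf G}}$, and $\mathbf G_m=\mathbf F_m$ for $m\in\max\mathbf G$; $\mathrm{cut}(\mathbf F,\mathbf G)=\mathbf F_{0_{\mathbf G}}\setminus\mathbf G_{0_{\mathbf G}}$; $\mathrm{impl}\,\mathbf G$, $\mathrm{expl}(\mathbf F,\mathbf G)$ refer to skeletons. $\varphi$ is a consistent family of foliage grafts for $\mathbf F$ if its members are foliage grafts for $\mathbf F$ with pairwise distinct skeletons forming a consistent family of grafts for the skeleton of $\mathbf F$; $\mathrm{loss}(\mathbf F,\varphi)=\bigcup_{\mathbf G\in\varphi}\mathrm{cut}(\mathbf F,\mathbf G)$; $\mathrm{supp}(\mathbf F,\varphi)$ is the support of the skeleton of $\mathbf F$ for the family of skeletons. $\mathrm{fhybr}(\mathbf F,\varphi)$ is the foliage tree $\mathbf H$ whose skeleton is the hybrid of the skeleton of $\mathbf F$ and the skeletons of members of $\varphi$, with leaves $\mathbf H_x=\mathbf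 G_x\setminus\mathrm{loss}(\mathbf F,\varphi)$ if $x\in\mathrm{impl}\,\mathbf G$, $\mathbf G\in\varphi$, and $\mathbf H_x=\mathbf F_x\setminus\mathrm{loss}(\mathbf F,\varphi)$ if $x\in\mathrm{supp}(\mathbf F,\varphi)$. A foliage graft $\mathbf G$ preserves shoots of $\mathbf F$ iff for each $p\in\mathrm{flesh}\,\mathbf G$ and each $y\in\mathrm{scope}_{\mathbf F}(p)\cap(\{0_{\mathbf G}\}\cup\mathrm{expl}(\mathbf F,\mathbf G))$ there is $x\in\mathrm{scope}_{\mathbf G}(p)\cap(\{0_{\mathbf G}\}\cup\mathrm{impl}\,\mathbf G)$ with $\mathrm{shoot}_{\mathbf G}(x)\gg\mathrm{shoot}_{\mathbf F}(y)$. $\mathbf H$ shoots into $\mathbf F$ iff for every $p\in\mathrm{flesh}\,\mathbf H$ and every $y\in\mathrm{scope}_{\mathbf F}(p)$ there is $x\in\mathrm{scope}_{\mathbf H}(p)$ with $\mathrm{shoot}_{\mathbf H}(x)\gg\mathrm{shoot}_{\mathbf F}(y)$. *)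

(* Defs.v *)
From Stdlib Require Import List Classical.
Set Implicit Arguments.

Record Tree (V : Type) := mkTree { nodes : V -> Prop; tlt : V -> V -> Prop }.

Section Trees.
Variable V : Type.
Implicit Types (T G : Tree V) (x y z r v m : V) (A : V -> Prop).

Definition tle T x y : Prop := x = y \/ tlt T x y.

Definition is_tree T : Prop :=
  (forall x y, tlt T x y -> nodes T x /\ nodes T y) /\
  (forall x, ~ tlt T x x) /\
  (forall x y z, tlt T x y -> tlt T y z -> tlt T x z) /\
  (forall x, nodes T x ->
     (forall y z, tlt T y x -> tlt T z x -> y = z \/ tlt T y z \/ tlt T z y) /\
     (forall S : V -> Prop, (forall y, S y -> tlt T y x) -> (exists y, S y) ->
        exists m, S m /\ forall y, S y -> tle T m y)).

Definition par T x y : Prop :=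
  nodes T x /\ nodes T y /\ ~ tle T x y /\ ~ tle T y x.

Definition sons T z s : Prop :=
  nodes T s /\ tlt T z s /\ ~ (exists w, tlt T z w /\ tlt T w s).

Definition maxn T m : Prop := nodes T m /\ ~ (exists y, tlt T m y).

Definition is_least T r : Prop := nodes T r /\ forall x, nodes T x -> tle T r x.

Definition upset T A v : Prop := nodes T v /\ exists a, A a /\ tle T a v.

Definition antichain T A : Prop :=
  forall x y, A x -> A y -> x <> y -> par T x y.

Definition impl G g0 x : Prop := nodes G x /\ x <> g0 /\ ~ maxn G x.

Definition is_graft T G g0 : Prop :=
  is_tree G /\
  (exists x y, nodes G x /\ nodes G y /\ x <> y) /\
  is_least G g0 /\
  nodes T g0 /\
  (forall m, maxn G m -> nodes T m /\ tlt T g0 m) /\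
  antichain T (maxn G) /\
  (forall x, impl G g0 x -> ~ nodes T x).

Definition expl T G g0 v : Prop := tlt T g0 v /\ ~ upset T (maxn G) v.

Definition consistent_fam T (I : Type) (gs : I -> Tree V) (rs : I -> V) : Prop :=
  (forall i, is_graft T (gs i) (rs i)) /\
  (forall i j, i <> j ->
     (forall x, impl (gs i) (rs i) x -> impl (gs j) (rs j) x -> False) /\
     (par T (rs i) (rs j) \/ upset T (maxn (gs j)) (rs i)
                          \/ upset T (maxn (gs i)) (rs j))).

Definition supp T (I : Type) (gs : I -> Tree V) (rs : I -> V) x : Prop :=
  nodes T x /\ ~ (exists i, expl T (gs i) (rs i) x).

Definition hybr T (I : Type) (gs : I -> Tree V) (rs : I -> V) : Tree V :=
  {| nodes := fun x => supp T gs rs x \/ exists i, impl (gs i) (rs i) x;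
     tlt := fun x y =>
       (supp T gs rs x /\ supp T gs rs y /\ tlt T x y)
       \/ (exists i, impl (gs i) (rs i) x /\ impl (gs i) (rs i) y
                              /\ tlt (gs i) x y)
       \/ (exists i, supp T gs rs x /\ impl (gs i) (rs i) y /\ tle T x (rs i))
       \/ (exists i, impl (gs i) (rs i) x /\ supp T gs rs y
                      /\ upset T (maxn (gs i)) y
                      /\ exists r, maxn (gs i) r /\ tle T r y /\ tlt (gs i) x r)
       \/ (exists i j, i <> j /\ impl (gs i) (rs i) x /\ impl (gs j) (rs j) y
                      /\ upset T (maxn (gs i)) (rs j)
                      /\ exists r, maxn (gs i) r /\ tle T r (rs j) /\ tlt (gs i) x r) |}.

End Trees.

Record FTree (V P : Type) := mkFTree { skel : Tree V; leaf : V -> P -> Prop }.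

(** a foliage graft together with its least node *)
Record FGraft (V P : Type) := mkFGraft { fgt : FTree V P; fg0 : V }.

Section Foliage.
Variables V P : Type.
Implicit Types (F G H : FTree V P) (x y z : V) (p : P).

Definition finite_set (S : V -> Prop) : Prop := exists l : list V, forall x, S x -> In x l.

Definition nonincreasing F : Prop :=
  forall x y, nodes (skel F) x -> nodes (skel F) y -> tle (skel F) x y ->
    forall p, leaf F y p -> leaf F x p.

Definition nonempty_leaves F : Prop :=
  forall x, nodes (skel F) x -> exists p, leaf F x p.

Definition flesh F p : Prop := exists x, nodes (skel F) x /\ leaf F x p.

Definition shoot F z (D : P -> Prop) : Prop :=
  exists C : V -> Prop,
    (forall s, C s -> sons (skel F) z s) /\
    finite_set (fun s => sons (skel F) z s /\ ~ C s) /\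
    (forall p, D p <-> exists s, C s /\ leaf F s p).

Definition scope F p y : Prop := nodes (skel F) y /\ leaf F y p.

Definition gg (gam del : (P -> Prop) -> Prop) : Prop :=
  forall D, del D -> (exists p, D p) ->
    exists E, gam E /\ (exists p, E p) /\ (forall p, E p -> D p).

Definition is_fgraft F (G : FGraft V P) : Prop :=
  nonincreasing (fgt G) /\
  is_graft (skel F) (skel (fgt G)) (fg0 G) /\
  (forall p, leaf (fgt G) (fg0 G) p -> leaf F (fg0 G) p) /\
  (forall m, maxn (skel (fgt G)) m -> forall p, leaf (fgt G) m p <-> leaf F m p).

Definition cut F (G : FGraft V P) p : Prop :=
  leaf F (fg0 G) p /\ ~ leaf (fgt G) (fg0 G) p.

Definition consistent_ffam F (I : Type) (phi : I -> FGraft V P) : Prop :=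
  (forall i, is_fgraft F (phi i)) /\
  (forall i j, i <> j -> skel (fgt (phi i)) <> skel (fgt (phi j))) /\
  consistent_fam (skel F) (fun i => skel (fgt (phi i))) (fun i => fg0 (phi i)).

Definition loss F (I : Type) (phi : I -> FGraft V P) p : Prop :=
  exists i, cut F (phi i) p.

Definition fsupp F (I : Type) (phi : I -> FGraft V P) x : Prop :=
  supp (skel F) (fun i => skel (fgt (phi i))) (fun i => fg0 (phi i)) x.

Definition fhybr F (I : Type) (phi : I -> FGraft V P) : FTree V P :=
  {| skel := hybr (skel F) (fun i => skel (fgt (phi i))) (fun i => fg0 (phi i));
     leaf := fun x p =>
       ((exists i, impl (skel (fgt (phi i))) (fg0 (phi i)) x /\ leaf (fgt (phi i)) x p)
        \/ (fsupp F phi x /\ leaf F x p))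
       /\ ~ loss F phi p |}.

Definition preserves_shoots F (G : FGraft V P) : Prop :=
  forall p, flesh (fgt G) p ->
  forall y, scope F p y -> (y = fg0 G \/ expl (skel F) (skel (fgt G)) (fg0 G) y) ->
    exists x, scope (fgt G) p x /\
              (x = fg0 G \/ impl (skel (fgt G)) (fg0 G) x) /\
              gg (shoot (fgt G) x) (shoot F y).

Definition shoots_into H F : Prop :=
  forall p, flesh H p -> forall y, scope F p y ->
    exists x, scope H p x /\ gg (shoot H x) (shoot F y).

End Foliage.

(* Main.v *)
Require Import Defs.
From Stdlib Require Import List Classical.

Section Gen.
Variable V : Type.

Lemma lt_nodes (t : Tree V) x y : is_tree t -> tlt t x y -> nodes t x /\ nodes t y.
Proof. intros [Hn _]; apply Hn. Qed.
Lemma lt_irr (t : Tree V) x : is_tree t -> tlt t x x -> False.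
Proof. intros [_ [Hn _]]; apply Hn. Qed.
Lemma lt_trans (t : Tree V) x y z : is_tree t -> tlt t x y -> tlt t y z -> tlt t x z.
Proof. intros [_ [_ [Hn _]]]; apply Hn. Qed.
Lemma le_lt_trans (t : Tree V) x y z : is_tree t -> tle t x y -> tlt t y z -> tlt t x z.
Proof. intros Ht [->|H1] H2; [exact H2| eapply lt_trans; eauto]. Qed.
Lemma lt_le_trans (t : Tree V) x y z : is_tree t -> tlt t x y -> tle t y z -> tlt t x z.
Proof. intros Ht H1 [<-|H2]; [exact H1| eapply lt_trans; eauto]. Qed.
Lemma lt_asym (t : Tree V) x y : is_tree t -> tlt t x y -> tle t y x -> False.
Proof. intros Ht H1 H2. apply (lt_irr t x Ht). eapply lt_le_trans; eauto. Qed.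
Lemma cmp (t : Tree V) a b x : is_tree t -> tlt t a x -> tlt t b x ->
  a = b \/ tlt t a b \/ tlt t b a.
Proof.
  intros Ht Ha Hb. pose proof (lt_nodes t a x Ht Ha) as [_ Hx].
  destruct Ht as [_ [_ [_ Hw]]]. destruct (Hw x Hx) as [Hc _]. apply Hc; auto.
Qed.
Lemma le_trans (t : Tree V) x y z : is_tree t -> tle t x y -> tle t y z -> tle t x z.
Proof. intros Ht [<-|H1] H2; [exact H2|right; eapply lt_le_trans; eauto]. Qed.
End Gen.
Arguments le_trans {V t x y z}.

Arguments lt_nodes {V t x y}.
Arguments lt_irr {V t x}.
Arguments lt_trans {V t x y z}.
Arguments le_lt_trans {V t x y z}.
Arguments lt_le_trans {V t x y z}.
Arguments lt_asym {V t x y}.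
Arguments cmp {V t a b x}.

Section GG.
Variables V P : Type.

Lemma gg_trans (A B C : (P -> Prop) -> Prop) : gg A B -> gg B C -> gg A C.
Proof.
  intros h1 h2 D HD Dn. destruct (h2 D HD Dn) as [E [HE [En ED]]].
  destruct (h1 E HE En) as [E' [HE' [En' ED']]].
  exists E'. repeat split; auto.
Qed.

Lemma gg_sons (Hf Kf : FTree V P) x :
  (forall s, sons (skel Hf) x s <-> sons (skel Kf) x s) ->
  (forall s p, sons (skel Kf) x s -> leaf Hf s p -> leaf Kf s p) ->
  (forall s, sons (skel Hf) x s -> exists p, leaf Hf s p) ->
  gg (shoot Hf x) (shoot Kf x).
Proof.
  intros Hs Hl Hne D [C [HC [Hfin HD]]] [p Dp].
  apply HD in Dp. destruct Dp as [s0 [Cs0 _]].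
  exists (fun q => exists s, C s /\ leaf Hf s q). split; [|split].
  - exists C. split; [intros s Cs; apply Hs; apply HC; auto|]. split.
    + destruct Hfin as [l Hl']. exists l. intros z [Hz Hnc]. apply Hl'.
      split; [apply Hs; auto| auto].
    + intros q; tauto.
  - destruct (Hne s0) as [q Hq]. apply Hs, HC, Cs0. exists q, s0; auto.
  - intros q [s [Cs Hq]]. apply HD. exists s; split; [exact Cs|].
    apply Hl; [apply HC; exact Cs| exact Hq].
Qed.
End GG.

Section Main.
Variables (V P : Type) (F : FTree V P) (I : Type) (phi : I -> FGraft V P).
Hypothesis HT : is_tree (skel F).
Hypothesis Hc : consistent_ffam F phi.

Local Notation T := (skel F).
Local Notation G i := (skel (fgt (phi i))).
Local Notation r i := (fg0 (phi i)).
Local Notation S := (supp (skel F) (fun i => skel (fgt (phi i))) (fun i => fg0 (phi i))).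
Local Notation Imp i := (impl (skel (fgt (phi i))) (fg0 (phi i))).
Local Notation H := (hybr (skel F) (fun i => skel (fgt (phi i))) (fun i => fg0 (phi i))).

Lemma graft i : is_graft T (G i) (r i).
Proof. destruct Hc as [_ [_ [Hg _]]]. exact (Hg i). Qed.
Lemma Gtree i : is_tree (G i).
Proof. apply (graft i). Qed.
Lemma Gleast i x : nodes (G i) x -> tle (G i) (r i) x.
Proof. intro. destruct (graft i) as [_ [_ [[_ Hl] _]]]. auto. Qed.
Lemma Grootn i : nodes (G i) (r i).
Proof. destruct (graft i) as [_ [_ [[Hl _] _]]]. auto. Qed.
Lemma rT i : nodes T (r i).
Proof. destruct (graft i) as [_ [_ [_ [h _]]]]. exact h. Qed.
Lemma maxT i m : maxn (G i) m -> tlt T (r i) m.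
Proof. intro Hm. destruct (graft i) as [_ [_ [_ [_ [Hx _]]]]]. apply Hx; auto. Qed.
Lemma max_anti i a b : maxn (G i) a -> maxn (G i) b -> tle T a b -> a = b.
Proof.
  intros Ha Hb Hab. destruct (classic (a = b)) as [E|E]; auto.
  destruct (graft i) as [_ [_ [_ [_ [_ [Hac _]]]]]].
  destruct (Hac a b Ha Hb E) as [_ [_ [Hn _]]]. contradiction.
Qed.
Lemma imp_notT i x : Imp i x -> ~ nodes T x.
Proof. intro Hx. destruct (graft i) as [_ [_ [_ [_ [_ [_ Hi]]]]]]. auto. Qed.
Lemma imp_notS i x : Imp i x -> ~ S x.
Proof. intros Hx [Hn _]. exact (imp_notT i x Hx Hn). Qed.
Lemma imp_S_False i x : Imp i x -> S x -> False.
Proof. intros h1 h2. exact (imp_notS i x h1 h2). Qed.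
Ltac contra_IS := exfalso; match goal with
  H1: impl _ _ ?z, H2: supp _ _ _ ?z |- _ => exact (imp_S_False _ _ H1 H2) end.
Lemma S_T x : S x -> nodes T x.
Proof. intros [h _]; exact h. Qed.
Lemma imp_disj i j x : Imp i x -> Imp j x -> i = j.
Proof.
  intros Hi Hj. destruct (classic (i = j)) as [E|E]; auto.
  destruct Hc as [_ [_ [_ Hp]]]. destruct (Hp i j E) as [Hd _].
  exfalso; exact (Hd x Hi Hj).
Qed.
Lemma pos i j : i <> j -> par T (r i) (r j) \/ upset T (maxn (G j)) (r i)
                                         \/ upset T (maxn (G i)) (r j).
Proof. intro E. destruct Hc as [_ [_ [_ Hp]]]. apply (Hp i j E). Qed.

Lemma root_neq i j : i <> j -> r i <> r j.
Proof.
  intros Hij E. destruct (pos i j Hij) as [[_ [_ [Hn _]]] | [[_ [m [Hm Hle]]] | [_ [m [Hm Hle]]]]].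
  - apply Hn; left; exact E.
  - rewrite E in Hle. exact (lt_asym HT (maxT j m Hm) Hle).
  - rewrite <- E in Hle. exact (lt_asym HT (maxT i m Hm) Hle).
Qed.

Lemma root_S i : S (r i).
Proof.
  split; [apply rT|]. intros [j [Hlt Hnu]]. simpl in Hlt, Hnu.
  destruct (classic (i = j)) as [<-|Hij]. { exact (lt_irr HT Hlt). }
  destruct (pos i j Hij) as [[_ [_ [_ Hn]]] | [Hu | [_ [m [Hm Hle]]]]].
  - apply Hn; right; exact Hlt.
  - contradiction.
  - apply (lt_asym HT (maxT i m Hm)). right. eapply le_lt_trans; eauto.
Qed.

Lemma max_S i m : maxn (G i) m -> S m.
Proof.
  intro Hm. pose proof (maxT i m Hm) as Hrm.
  split; [exact (proj2 (lt_nodes HT Hrm))|]. intros [j [Hlt Hnu]]. simpl in Hlt, Hnu.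
  destruct (classic (i = j)) as [<-|Hij].
  - apply Hnu. split; [exact (proj2 (lt_nodes HT Hrm))|]. exists m; split; [exact Hm| left; reflexivity].
  - destruct (pos i j Hij) as [Hpar | [[_ [m' [Hm' Hle]]] | [_ [m' [Hm' Hle]]]]].
    + destruct Hpar as [_ [_ [Hn1 Hn2]]].
      destruct (cmp HT Hrm Hlt) as [E|[E|E]].
      * apply Hn1; left; exact E.
      * apply Hn1; right; exact E.
      * apply Hn2; right; exact E.
    + apply Hnu. split; [exact (proj2 (lt_nodes HT Hrm))|]. exists m'; split; [exact Hm'|].
      right. eapply le_lt_trans; eauto.
    + assert (E : m' = m).
      { apply (max_anti i); auto. right. eapply le_lt_trans; eauto. }
      subst m'. exact (lt_asym HT Hlt Hle).
Qed.

Lemma max_below i m s z : maxn (G i) m -> maxn (G i) s -> tle T m z -> tlt T z s -> False.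
Proof.
  intros Hm Hs Hmz Hzs. assert (E : m = s).
  { apply (max_anti i); auto. right. eapply le_lt_trans; eauto. }
  subst m. exact (lt_asym HT Hzs Hmz).
Qed.

Lemma Gnode_cases i s : nodes (G i) s -> s = r i \/ maxn (G i) s \/ Imp i s.
Proof.
  intro Hs. destruct (classic (s = r i)) as [E|E]; [left; auto|right].
  destruct (classic (maxn (G i) s)) as [M|M]; [left; auto| right].
  split; auto.
Qed.
Lemma Glt_notroot i x s : tlt (G i) x s -> s <> r i.
Proof.
  intros Hxs E. subst s. pose proof (Gleast i x (proj1 (lt_nodes (Gtree i) Hxs))) as Hl.
  exact (lt_asym (Gtree i) Hxs Hl).
Qed.
Lemma Groot_lt i s : nodes (G i) s -> s <> r i -> tlt (G i) (r i) s.
Proof. intros Hn E. destruct (Gleast i s Hn) as [E'|L]; [congruence|exact L]. Qed.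
Lemma Gimp_between i a w b : tlt (G i) a w -> tlt (G i) w b -> Imp i w.
Proof.
  intros h1 h2. split; [exact (proj2 (lt_nodes (Gtree i) h1))|]. split.
  - exact (Glt_notroot i a w h1).
  - intros [_ Hm]. apply Hm. exists b; exact h2.
Qed.

Lemma hlt_nodes x y : tlt H x y -> (S x \/ exists i, Imp i x) /\ (S y \/ exists i, Imp i y).
Proof.
  simpl. intros [[a [b _]] | [[i [a [b _]]] | [[i [a [b _]]] | [[i [a [b _]]] | [i [j [_ [a [b _]]]]]]]]];
  split; eauto.
Qed.

Lemma hlt_SS x y : S x -> S y -> tlt H x y -> tlt T x y.
Proof.
  intros Sx Sy. simpl.
  intros [[_ [_ h]] | [[i [a _]] | [[i [_ [b _]]] | [[i [a _]] | [i [j [_ [a _]]]]]]]];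
  auto; contra_IS.
Qed.

Lemma hlt_SI x y j : S x -> Imp j y -> tlt H x y -> tle T x (r j).
Proof.
  intros Sx Iy. simpl.
  intros [[_ [b _]] | [[i [a _]] | [[i [_ [b c]]] | [[i [a _]] | [i [k [_ [a _]]]]]]]];
  try contra_IS.
  rewrite (imp_disj j i y Iy b). exact c.
Qed.

Lemma hlt_IS x y j : Imp j x -> S y -> tlt H x y ->
  exists m, maxn (G j) m /\ tle T m y /\ tlt (G j) x m.
Proof.
  intros Ix Sy. simpl.
  intros [[a _] | [[i [_ [b _]]] | [[i [a _]] | [[i [a [_ [_ c]]]] | [i [k [_ [_ [b _]]]]]]]]];
  try contra_IS.
  rewrite (imp_disj j i x Ix a). exact c.
Qed.

Lemma hlt_II_same x y j : Imp j x -> Imp j y -> tlt H x y -> tlt (G j) x y.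
Proof.
  intros Ix Iy. simpl.
  intros [[a _] | [[i [a [_ c]]] | [[i [a _]] | [[i [_ [b _]]] | [i [k [ne [a [b _]]]]]]]]];
  try contra_IS.
  - rewrite (imp_disj j i x Ix a). exact c.
  - exfalso. apply ne. rewrite <- (imp_disj j i x Ix a). exact (imp_disj j k y Iy b).
Qed.

Lemma hlt_II_diff x y i j : Imp i x -> Imp j y -> i <> j -> tlt H x y ->
  exists m, maxn (G i) m /\ tle T m (r j) /\ tlt (G i) x m.
Proof.
  intros Ix Iy ne. simpl.
  intros [[a _] | [[k [a [b _]]] | [[k [a _]] | [[k [_ [b _]]] | [k [l [_ [a [b [_ c]]]]]]]]]];
  try contra_IS.
  - exfalso. apply ne. rewrite (imp_disj i k x Ix a). exact (eq_sym (imp_disj j k y Iy b)).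
  - rewrite (imp_disj i k x Ix a), (imp_disj j l y Iy b). exact c.
Qed.

Lemma mk_SS x y : S x -> S y -> tlt T x y -> tlt H x y.
Proof. intros; simpl; left; auto. Qed.
Lemma mk_SI x y j : S x -> Imp j y -> tle T x (r j) -> tlt H x y.
Proof. intros; simpl; right; right; left; exists j; auto. Qed.
Lemma mk_IS x y j m : Imp j x -> S y -> maxn (G j) m -> tle T m y -> tlt (G j) x m -> tlt H x y.
Proof.
  intros h1 h2 h3 h4 h5; simpl; right; right; right; left; exists j.
  split; [exact h1|]. split; [exact h2|]. split; [split; [exact (S_T y h2)| exists m; auto]| exists m; auto].
Qed.
Lemma mk_II x y j : Imp j x -> Imp j y -> tlt (G j) x y -> tlt H x y.
Proof. intros; simpl; right; left; exists j; auto. Qed.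
Lemma nH_S x : S x -> nodes H x.
Proof. intros; simpl; left; auto. Qed.
Lemma nH_I i x : Imp i x -> nodes H x.
Proof. intros; simpl; right; exists i; auto. Qed.

Lemma upset_of_S i z : S z -> tlt T (r i) z -> upset T (maxn (G i)) z.
Proof.
  intros [_ Hz] Hlt. apply NNPP. intro Hn. apply Hz. exists i. split; auto.
Qed.

Lemma sons_supp y s : S y -> (forall i, y <> r i) -> (sons H y s <-> sons T y s).
Proof.
  intros Sy Hnr. split.
  - intros [nHs [hys nb]]. destruct nHs as [Ss | [j Is]].
    + pose proof (hlt_SS y s Sy Ss hys) as hT.
      split; [exact (S_T s Ss)|]. split; [exact hT|].
      intros [w [h1 h2]]. apply nb.
      destruct (classic (S w)) as [Sw|nSw].
      * exists w. split; [apply mk_SS|apply mk_SS]; auto.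
      * assert (nTw : nodes T w) by exact (proj2 (lt_nodes HT h1)).
        assert (Hex : exists j, expl T (G j) (r j) w).
        { apply NNPP. intro Hn. apply nSw. split; auto. }
        destruct Hex as [j [hjw hnu]].
        destruct (cmp HT h1 hjw) as [E|[E|E]].
        -- exfalso. exact (Hnr j E).
        -- exists (r j). split.
           ++ apply mk_SS; auto; apply root_S.
           ++ apply mk_SS; auto; [apply root_S|]. eapply lt_trans; eauto.
        -- exfalso. destruct Sy as [_ Sy]. apply Sy. exists j. split; [exact E|].
           intros [_ [m [Hm Hmy]]]. apply hnu. split; auto. exists m. split; auto.
           right. eapply le_lt_trans; eauto.
    + exfalso. pose proof (hlt_SI y s j Sy Is hys) as hle.
      destruct hle as [E|hlt]; [exact (Hnr j E)|].
      apply nb. exists (r j). split.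
      * apply mk_SS; auto. apply root_S.
      * apply (mk_SI _ _ j); auto; try (apply root_S); try (left; reflexivity).
  - intros [nTs [hys nb]].
    assert (Ss : S s).
    { split; auto. intros [j [hjs hnu]]. simpl in hjs, hnu.
      destruct (cmp HT hys hjs) as [E|[E|E]].
      - exact (Hnr j E).
      - apply nb. exists (r j). auto.
      - destruct Sy as [_ Sy]. apply Sy. exists j. split; [exact E|].
        intros [_ [m [Hm Hmy]]]. apply hnu. split; auto. exists m. split; auto.
        right. eapply le_lt_trans; eauto. }
    split; [apply nH_S; auto|]. split; [apply mk_SS; auto|].
    intros [w [h1 h2]]. destruct (proj2 (hlt_nodes y w h1)) as [Sw | [j Iw]].
    + apply nb. exists w. split; [exact (hlt_SS y w Sy Sw h1)|exact (hlt_SS w s Sw Ss h2)].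
    + pose proof (hlt_SI y w j Sy Iw h1) as hle.
      destruct (hlt_IS w s j Iw Ss h2) as [m [Hm [Hms _]]].
      destruct hle as [E|hlt]; [exact (Hnr j E)|].
      apply nb. exists (r j). split; auto.
      eapply lt_le_trans; [exact HT| exact (maxT j m Hm)| exact Hms].
Qed.

Lemma S_not_expl i z : S z -> ~ expl T (G i) (r i) z.
Proof. intros [_ h] e. apply h. exists i. exact e. Qed.

Lemma sons_graft i x s : (x = r i \/ Imp i x) -> (sons H x s <-> sons (G i) x s).
Proof.
  intro Hx. split.
  - intros [nHs [hxs nb]]. destruct Hx as [Ex | Ix].
    + subst x. destruct nHs as [Ss | [j Is]].
      * pose proof (hlt_SS _ s (root_S i) Ss hxs) as hT.
        destruct (upset_of_S i s Ss hT) as [_ [m [Hm Hms]]].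
        destruct Hms as [E|Hms].
        -- subst m. split; [exact (proj1 Hm)|]. split.
           ++ apply Groot_lt; [exact (proj1 Hm)|]. intro E. rewrite E in hT. exact (lt_irr HT hT).
           ++ intros [w [h1 h2]]. pose proof (Gimp_between i _ _ _ h1 h2) as Iw.
              apply nb. exists w. split.
              ** apply (mk_SI _ _ i); auto; try (apply root_S); try (left; reflexivity).
              ** apply (mk_IS _ _ i s); auto; try (left; reflexivity).
        -- exfalso. apply nb. exists m. split.
           ++ apply mk_SS; [apply root_S| apply (max_S i m Hm)| apply (maxT i m Hm)].
           ++ apply mk_SS; auto. apply (max_S i m Hm).
      * pose proof (hlt_SI _ s j (root_S i) Is hxs) as hle.
        destruct (classic (j = i)) as [<-|ne].
        -- split; [exact (proj1 Is)|]. split.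
           ++ apply Groot_lt; [exact (proj1 Is)| exact (proj1 (proj2 Is))].
           ++ intros [w [h1 h2]]. pose proof (Gimp_between j _ _ _ h1 h2) as Iw.
              apply nb. exists w. split.
              ** apply (mk_SI _ _ j); auto; try (apply root_S); try (left; reflexivity).
              ** apply (mk_II _ _ j); auto.
        -- exfalso. destruct hle as [E|hlt]; [exact (root_neq i j (fun e => ne (eq_sym e)) E)|].
           apply nb. exists (r j). split.
           ++ apply mk_SS; auto; apply root_S.
           ++ apply (mk_SI _ _ j); auto; try (apply root_S); try (left; reflexivity).
    + destruct nHs as [Ss | [j Is]].
      * destruct (hlt_IS x s i Ix Ss hxs) as [m [Hm [Hms hxm]]].
        destruct Hms as [E|Hms].
        -- subst m. split; [exact (proj1 Hm)|]. split; [exact hxm|].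
           intros [w [h1 h2]]. pose proof (Gimp_between i _ _ _ h1 h2) as Iw.
           apply nb. exists w. split.
           ++ apply (mk_II _ _ i); auto.
           ++ apply (mk_IS _ _ i s); auto; try (left; reflexivity).
        -- exfalso. apply nb. exists m. split.
           ++ apply (mk_IS _ _ i m); auto; try (apply (max_S i m Hm)); try (left; reflexivity).
           ++ apply mk_SS; auto. apply (max_S i m Hm).
      * destruct (classic (j = i)) as [<-|ne].
        -- pose proof (hlt_II_same x s j Ix Is hxs) as hG.
           split; [exact (proj1 Is)|]. split; [exact hG|].
           intros [w [h1 h2]]. pose proof (Gimp_between j _ _ _ h1 h2) as Iw.
           apply nb. exists w. split; apply (mk_II _ _ j); auto.
        -- exfalso. destruct (hlt_II_diff x s i j Ix Is (fun e => ne (eq_sym e)) hxs)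
             as [m [Hm [Hmr hxm]]].
           apply nb. exists m. split.
           ++ apply (mk_IS _ _ i m); auto; try (apply (max_S i m Hm)); try (left; reflexivity).
           ++ apply (mk_SI _ _ j); auto; try (apply (max_S i m Hm)).
  - intros [nGs [hxs nb]].
    assert (Ks : maxn (G i) s \/ Imp i s).
    { destruct (Gnode_cases i s nGs) as [E|K]; auto.
      exfalso. exact (Glt_notroot i x s hxs E). }
    split; [destruct Ks as [M|Is]; [apply nH_S, (max_S i s M)| apply (nH_I i s Is)]|].
    split.
    + destruct Hx as [Ex|Ix]; [subst x|]; destruct Ks as [M|Is].
      * apply mk_SS; [apply root_S| apply (max_S i s M)| apply (maxT i s M)].
      * apply (mk_SI _ _ i); auto; try (apply root_S); try (left; reflexivity).
      * apply (mk_IS _ _ i s); auto; try (apply (max_S i s M)); try (left; reflexivity).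
      * apply (mk_II _ _ i); auto.
    + intros [w [h1 h2]].
      destruct (proj2 (hlt_nodes x w h1)) as [Sw | [j Iw]].
      * destruct Hx as [Ex|Ix]; [subst x|].
        -- pose proof (hlt_SS _ w (root_S i) Sw h1) as hrw.
           destruct Ks as [M|Is].
           ++ pose proof (hlt_SS w s Sw (max_S i s M) h2) as hws.
              destruct (upset_of_S i w Sw hrw) as [_ [m [Hm Hmw]]].
              exact (max_below i m s w Hm M Hmw hws).
           ++ pose proof (hlt_SI w s i Sw Is h2) as hwr.
              exact (lt_asym HT hrw hwr).
        -- destruct (hlt_IS x w i Ix Sw h1) as [m [Hm [Hmw _]]].
           destruct Ks as [M|Is].
           ++ pose proof (hlt_SS w s Sw (max_S i s M) h2) as hws.
              exact (max_below i m s w Hm M Hmw hws).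
           ++ pose proof (hlt_SI w s i Sw Is h2) as hwr.
              apply (lt_asym HT (maxT i m Hm)).
              exact (le_trans HT Hmw hwr).
      * destruct (classic (j = i)) as [<-|ne].
        -- assert (hws : tlt (G j) w s).
           { destruct Ks as [M|Is].
             - destruct (hlt_IS w s j Iw (max_S j s M) h2) as [m [Hm [Hms hwm]]].
               rewrite (max_anti j m s Hm M Hms) in hwm. exact hwm.
             - exact (hlt_II_same w s j Iw Is h2). }
           apply nb. exists w. split; [|exact hws].
           destruct Hx as [Ex|Ix]; [subst x|].
           ++ apply Groot_lt; [exact (proj1 Iw)| exact (proj1 (proj2 Iw))].
           ++ exact (hlt_II_same x w j Ix Iw h1).
        -- destruct Hx as [Ex|Ix]; [subst x|].
           ++ pose proof (hlt_SI _ w j (root_S i) Iw h1) as hrj.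
              assert (hlt : tlt T (r i) (r j)).
              { destruct hrj as [E|L]; [exfalso; exact (root_neq i j (fun e => ne (eq_sym e)) E)| exact L]. }
              destruct Ks as [M|Is].
              ** destruct (hlt_IS w s j Iw (max_S i s M) h2) as [m' [Hm' [Hm's _]]].
                 destruct (upset_of_S i (r j) (root_S j) hlt) as [_ [m [Hm Hmr]]].
                 apply (max_below i m s (r j) Hm M Hmr).
                 eapply lt_le_trans; [exact HT| exact (maxT j m' Hm')| exact Hm's].
              ** destruct (hlt_II_diff w s j i Iw Is ne h2) as [m' [Hm' [Hm'r _]]].
                 apply (lt_asym HT hlt). right.
                 eapply lt_le_trans; [exact HT| exact (maxT j m' Hm')| exact Hm'r].
           ++ destruct (hlt_II_diff x w i j Ix Iw (fun e => ne (eq_sym e)) h1) as [m [Hm [Hmr _]]].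
              destruct Ks as [M|Is].
              ** destruct (hlt_IS w s j Iw (max_S i s M) h2) as [m' [Hm' [Hm's _]]].
                 apply (max_below i m s (r j) Hm M Hmr).
                 eapply lt_le_trans; [exact HT| exact (maxT j m' Hm')| exact Hm's].
              ** destruct (hlt_II_diff w s j i Iw Is ne h2) as [m' [Hm' [Hm'r _]]].
                 apply (lt_asym HT (maxT i m Hm)). right.
                 eapply le_lt_trans; [exact HT| exact Hmr|].
                 eapply lt_le_trans; [exact HT| exact (maxT j m' Hm')| exact Hm'r].
Qed.

Lemma leaf_graft i x s p : sons (G i) x s -> leaf (fhybr F phi) s p -> leaf (fgt (phi i)) s p.
Proof.
  intros [nGs [hxs _]] [Hl _].
  destruct (Gnode_cases i s nGs) as [E|[M|Is]].
  - exfalso. exact (Glt_notroot i x s hxs E).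
  - destruct Hl as [[j [Ij _]] | [_ Fs]].
    + exfalso. apply (imp_notT j s Ij). exact (proj2 (lt_nodes HT (maxT i s M))).
    + destruct Hc as [Hf _]. destruct (Hf i) as [_ [_ [_ Hmx]]]. apply (Hmx s M). exact Fs.
  - destruct Hl as [[j [Ij Gs]] | [Ss _]].
    + rewrite (imp_disj i j s Is Ij). exact Gs.
    + exfalso. exact (imp_S_False i s Is Ss).
Qed.

Lemma leaf_supp y s p : sons T y s -> leaf (fhybr F phi) s p -> leaf F s p.
Proof.
  intros [nTs _] [Hl _]. destruct Hl as [[j [Ij _]] | [_ Fs]].
  - exfalso. exact (imp_notT j s Ij nTs).
  - exact Fs.
Qed.

Theorem main_sec :
  nonincreasing F ->
  nonempty_leaves (fhybr F phi) ->
  (forall i, preserves_shoots F (phi i)) ->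
  shoots_into (fhybr F phi) F.
Proof.
  intros Hni Hne Hps p [x0 [_ [_ Hnl]]] y [nTy Fyp].
  destruct (classic (exists i, y = r i \/ expl T (G i) (r i) y)) as [[i Hi]|Hno].
  - assert (hry : tle T (r i) y).
    { destruct Hi as [E|[L _]]; [left; symmetry; exact E| right; exact L]. }
    assert (Frp : leaf F (r i) p) by exact (Hni _ _ (rT i) nTy hry p Fyp).
    assert (Grp : leaf (fgt (phi i)) (r i) p).
    { apply NNPP. intro Hn. apply Hnl. exists i. split; auto. }
    assert (Hfl : flesh (fgt (phi i)) p).
    { exists (r i). split; [apply Grootn| exact Grp]. }
    destruct (Hps i p Hfl y (conj nTy Fyp) Hi) as [x [[nGx Gxp] [Hx gg1]]].
    exists x. split.
    + split.
      * destruct Hx as [E|Ix]; [rewrite E; apply nH_S, root_S| exact (nH_I i x Ix)].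
      * split; [|exact Hnl].
        destruct Hx as [E|Ix].
        -- right. rewrite E in *. split; [apply root_S|].
           destruct Hc as [Hf _]. destruct (Hf i) as [_ [_ [Hr _]]]. apply Hr. exact Gxp.
        -- left. exists i. split; auto.
    + eapply gg_trans; [|exact gg1]. apply gg_sons.
      * intro s. apply (sons_graft i x s Hx).
      * intros s q Hs Hq. exact (leaf_graft i x s q Hs Hq).
      * intros s [nHs _]. apply Hne. exact nHs.
  - assert (Sy : S y).
    { split; auto. intros [i E]. apply Hno. exists i. right. exact E. }
    exists y. split.
    + split; [apply nH_S, Sy|]. split; [|exact Hnl]. right. split; auto.
    + apply gg_sons.
      * intro s. apply sons_supp; auto. intros i E. apply Hno. exists i. left; exact E.
      * intros s q Hs Hq. exact (leaf_supp y s q Hs Hq).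
      * intros s [nHs _]. apply Hne. exact nHs.
Qed.
End Main.

Theorem mainTheorem13 (V P : Type) (F : FTree V P) (I : Type) (phi : I -> FGraft V P) :
  is_tree (skel F) ->
  nonincreasing F ->
  consistent_ffam F phi ->
  nonempty_leaves (fhybr F phi) ->
  (forall i, preserves_shoots F (phi i)) ->
  shoots_into (fhybr F phi) F.
Proof.
  intros HT Hni Hc. exact (main_sec V P F I phi HT Hc Hni).
Qed.
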